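(* Let $a:=\sum_{i=1}^{\infty}10^{1-\frac12 i(i+1)}$ (an irrational number). There exist a countable graph $G$ and a weight function $w:E(G)\to\{a,\,2a,\,2a-1\}$ such that $G$ has no strongly $w$-maximal matching. (Hence the rationality hypothesis cannot be dropped from the statement that every graph with finitely-valued rational edge weights has a strongly $w$-maximal matching.)
   Context: For a set $F$ of edges, $w[F]:=\sum_{e\in F}w(e)$. A matching $M$ in $G$ is called strongly $w$-maximal if $w[N\setminus M]\le w[M\setminus N]$ for every matching $N$ in $G$ with $|M\setminus N|<\infty$ and $|N\setminus M|<\infty$. *)

(* Defs.v *)
From Stdlib Require Import Reals List.
Import ListNotations.
Open Scope R_scope.

(* n-th term (n starting at 0, i = n+1) of  a = sum_{i>=1} 10^(1 - i(i+1)/2). *)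
Definition a_term (n : nat) : R :=
  Rpower 10 (1 - INR (S n) * INR (S (S n)) / 2).

(* Graphs: countable simple graphs with vertex set nat, given by a symmetric
   irreflexive adjacency relation.  An edge {u,v} is represented by the pair
   (u,v) with u < v. *)
Definition simple_graph (adj : nat -> nat -> Prop) : Prop :=
  (forall u v, adj u v -> adj v u) /\ (forall u, ~ adj u u).

Definition is_edge (adj : nat -> nat -> Prop) (e : nat * nat) : Prop :=
  (fst e < snd e)%nat /\ adj (fst e) (snd e).

Definition edge_set := nat * nat -> Prop.

Definition is_matching (adj : nat -> nat -> Prop) (M : edge_set) : Prop :=
  (forall e, M e -> is_edge adj e) /\
  (forall e f, M e -> M f -> e <> f ->
     fst e <> fst f /\ fst e <> snd f /\ snd e <> fst f /\ snd e <> snd f).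

Definition set_diff (A B : edge_set) : edge_set := fun e => A e /\ ~ B e.

Definition finite_set (F : edge_set) : Prop :=
  exists l : list (nat * nat), forall e, F e <-> In e l.

Definition wsum (w : nat -> nat -> R) (F : edge_set) (s : R) : Prop :=
  exists l : list (nat * nat),
    NoDup l /\ (forall e, F e <-> In e l) /\
    s = fold_right (fun e acc => w (fst e) (snd e) + acc) 0 l.

Definition strongly_w_maximal (adj : nat -> nat -> Prop)
    (w : nat -> nat -> R) (M : edge_set) : Prop :=
  is_matching adj M /\
  forall N : edge_set, is_matching adj N ->
    finite_set (set_diff M N) -> finite_set (set_diff N M) ->
    forall sNM sMN, wsum w (set_diff N M) sNM -> wsum w (set_diff M N) sMN ->
      sNM <= sMN.

(* Main.v *)
Require Import Defs.
From Stdlib Require Import Reals Lra Lia List Permutation Classical ClassicalEpsilon.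
From Stdlib Require Import Cantor.
Import ListNotations.
Open Scope R_scope.

Fixpoint T (k : nat) : nat := match k with O => O | S k' => (T k' + k' + 2)%nat end.

Lemma T_spec k : (2 * (T k + 1) = (k+1)*(k+2))%nat.
Proof. induction k; simpl T; nia. Qed.

Lemma INR10 : INR 10 = 10.
Proof. simpl; lra. Qed.

Lemma a_term_eq k : a_term k = / 10 ^ (T k).
Proof.
  unfold a_term.
  assert (H : 1 - INR (S k) * INR (S (S k)) / 2 = - INR (T k)).
  { pose proof (T_spec k) as Hs. apply (f_equal INR) in Hs.
    rewrite !mult_INR, !plus_INR in Hs. simpl in Hs.
    rewrite !S_INR. nra. }
  rewrite H, Rpower_Ropp, Rpower_pow by lra. reflexivity.
Qed.

Lemma pow10_pos n : 0 < 10 ^ n.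
Proof. apply pow_lt; lra. Qed.

Definition Sp n := sum_f_R0 a_term n.

Fixpoint Q (n : nat) : nat := match n with O => 1%nat | S n' => (Q n' * 10^(n'+2) + 1)%nat end.

Lemma TS n : T (S n) = (T n + (n+2))%nat.
Proof. simpl; lia. Qed.

Lemma Q_spec n : 10 ^ (T n) * Sp n = INR (Q n).
Proof.
  induction n.
  - unfold Sp; simpl. rewrite a_term_eq. simpl. lra.
  - unfold Sp in *. simpl sum_f_R0. rewrite a_term_eq.
    rewrite TS, pow_add. simpl Q. rewrite plus_INR, mult_INR, pow_INR, INR10.
    rewrite <- IHn. rewrite Rmult_plus_distr_l.
    rewrite <- pow_add.
    rewrite Rinv_r by (apply Rgt_not_eq, pow10_pos).
    rewrite pow_add. simpl INR. ring.
Qed.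

Lemma lim_le f a B : infinite_sum f a -> (exists N, forall m, (m >= N)%nat -> sum_f_R0 f m <= B) -> a <= B.
Proof.
  intros Ha [N HN]. destruct (Rle_dec a B) as [|Hn]; auto.
  destruct (Ha (a - B)) as [N1 HN1]; [lra|].
  specialize (HN1 (max N N1) ltac:(lia)). specialize (HN (max N N1) ltac:(lia)).
  unfold R_dist in HN1. apply Rabs_def2 in HN1. lra.
Qed.

Lemma lim_ge f a B : infinite_sum f a -> (exists N, forall m, (m >= N)%nat -> B <= sum_f_R0 f m) -> B <= a.
Proof.
  intros Ha [N HN]. destruct (Rle_dec B a) as [|Hn]; auto.
  destruct (Ha (B - a)) as [N1 HN1]; [lra|].
  specialize (HN1 (max N N1) ltac:(lia)). specialize (HN (max N N1) ltac:(lia)).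
  unfold R_dist in HN1. apply Rabs_def2 in HN1. lra.
Qed.

Lemma Sp_mono n d : Sp n <= Sp (n + d).
Proof.
  induction d. rewrite Nat.add_0_r; lra.
  replace (n + S d)%nat with (S (n + d)) by lia. unfold Sp in *. simpl.
  rewrite a_term_eq. pose proof (pow10_pos (T (S (n+d)))).
  pose proof (Rinv_0_lt_compat _ H). lra.
Qed.

Definition Bd k := (10/9) * / 10 ^ (T (S k)).

Lemma Bd_step k : Sp (S k) + Bd (S k) <= Sp k + Bd k.
Proof.
  unfold Sp, Bd. simpl sum_f_R0. rewrite a_term_eq.
  rewrite (TS (S k)), pow_add, Rinv_mult.
  set (X := / 10 ^ T (S k)). set (Y := / 10 ^ (S k + 2)).
  assert (0 < X) by (apply Rinv_0_lt_compat, pow10_pos).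
  assert (Y <= / 10).
  { unfold Y. apply Rinv_le_contravar; [lra|].
    replace (S k + 2)%nat with (S (S k + 1)) by lia. simpl.
    pose proof (pow_R1_Rle 10 (k + 1) ltac:(lra)). nra. }
  assert (0 < Y) by (apply Rinv_0_lt_compat, pow10_pos).
  nra.
Qed.

Lemma Bd_pos k : 0 < Bd k.
Proof. unfold Bd. pose proof (Rinv_0_lt_compat _ (pow10_pos (T (S k)))). lra. Qed.

Lemma Sp_upper n d : Sp (n + d) <= Sp n + Bd n.
Proof.
  assert (forall d, Sp (n + d) + Bd (n+d) <= Sp n + Bd n).
  { induction d0. rewrite Nat.add_0_r; lra.
    replace (n + S d0)%nat with (S (n + d0)) by lia.
    pose proof (Bd_step (n + d0)). lra. }
  pose proof (H d). pose proof (Bd_pos (n+d)). lra.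
Qed.

Section A.
Variable a : R.
Hypothesis ha : infinite_sum a_term a.

Lemma a_upper n : a <= Sp n + Bd n.
Proof.
  apply (lim_le _ _ _ ha). exists n. intros m Hm.
  replace m with (n + (m - n))%nat by lia. apply Sp_upper.
Qed.

Lemma a_lower n : Sp n <= a.
Proof.
  apply (lim_ge _ _ _ ha). exists n. intros m Hm.
  replace m with (n + (m - n))%nat by lia. apply Sp_mono.
Qed.

Definition r n := 10 ^ (T n) * (a - Sp n).

Lemma r_pos n : 0 < r n.
Proof.
  unfold r. apply Rmult_lt_0_compat; [apply pow10_pos|].
  pose proof (a_lower (S n)). unfold Sp in *. simpl in H.
  rewrite (a_term_eq (S n)) in H.
  pose proof (Rinv_0_lt_compat _ (pow10_pos (T (S n)))). lra.
Qed.

Lemma r_upper n : r n <= (10/9) * / 10 ^ (n+2).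
Proof.
  unfold r. pose proof (a_upper n). unfold Bd in H. rewrite TS, pow_add, Rinv_mult in H.
  pose proof (pow10_pos (T n)).
  apply Rle_trans with (10 ^ T n * (10 / 9 * (/ 10 ^ T n * / 10 ^ (n + 2)))).
  apply Rmult_le_compat_l; lra.
  right. field. split; apply Rgt_not_eq; apply pow10_pos.
Qed.

Lemma a_bounds : 1 + / 100 <= a <= 1 + (10/9) * / 100.
Proof.
  split.
  - pose proof (a_lower 1). unfold Sp in H. simpl in H. rewrite !a_term_eq in H. simpl in H. lra.
  - pose proof (a_upper 0). unfold Sp, Bd in H. simpl in H. rewrite !a_term_eq in H. simpl in H. lra.
Qed.

End A.

Fixpoint lam (l : list R) : R := match l with [] => 0 | x :: l' => Rmax 0 (x - lam l') end.
Fixpoint opt (l : list R) : R := match l with [] => 0 | x :: l' => lam (x :: l') + opt l' end.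

Lemma lam_nonneg l : 0 <= lam l.
Proof. destruct l; simpl; [lra|apply Rmax_l]. Qed.

Section C.
Variable a : R.
Hypothesis ha : infinite_sum a_term a.

Definition dd := a - 1.

Fixpoint cnt (K : nat) : R * nat :=
  match K with
  | O => (0, O)
  | S K' => let (c, b) := cnt K' in
            if Rle_dec 1 (c + dd) then (c + dd - 1, S b) else (c + dd, b)
  end.

Lemma dd_bounds : / 100 <= dd <= (10/9) * / 100.
Proof. pose proof (a_bounds a ha). unfold dd. lra. Qed.

Lemma cnt_inv K : 0 <= fst (cnt K) < 1 /\ fst (cnt K) = INR K * dd - INR (snd (cnt K)).
Proof.
  pose proof dd_bounds.
  induction K; cbn [cnt fst snd]. simpl; split; lra.
  destruct (cnt K) as [c b]. simpl in IHK. destruct IHK as [IH1 IH2].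
  destruct (Rle_dec 1 (c + dd)); cbn [fst snd]; rewrite ?S_INR; (split; [lra| rewrite IH2; ring]).
Qed.

Fixpoint gad (K : nat) : list R :=
  match K with
  | O => []
  | S K' => (if Rle_dec 1 (fst (cnt K') + dd) then [2*a-1; 2*a; 2*a-1; a] else [2*a-1; a]) ++ gad K'
  end.

Lemma lam_gad K : lam (gad K) = fst (cnt K).
Proof.
  pose proof dd_bounds. pose proof (a_bounds a ha).
  induction K; simpl. reflexivity.
  pose proof (cnt_inv K) as [Hi _].
  destruct (cnt K) as [c b] eqn:E. simpl in *.
  destruct (Rle_dec 1 (c + dd)); simpl; rewrite IHK; unfold dd in *.
  - unfold Rmax. repeat (destruct (Rle_dec _ _)); lra.
  - unfold Rmax. repeat (destruct (Rle_dec _ _)); lra.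
Qed.

Lemma gad_weights K : Forall (fun x => x = a \/ x = 2*a \/ x = 2*a-1) (gad K).
Proof.
  induction K; simpl. constructor.
  apply Forall_app; split; auto.
  destruct (Rle_dec _ _); repeat constructor; auto; lra.
Qed.

Definition ws (n : nat) : list R := gad (10 ^ (T n)).

Lemma IZR_small z : -1 < IZR z < 1 -> z = 0%Z.
Proof. intros [H1 H2]. apply lt_IZR in H1. apply lt_IZR in H2. lia. Qed.

Lemma lam_ws n : lam (ws n) = r a n.
Proof.
  unfold ws. rewrite lam_gad.
  pose proof (cnt_inv (10 ^ T n)) as [Hi He].
  pose proof (r_pos a ha n). pose proof (r_upper a ha n).
  assert (Hs : 0 < / 10 ^ (n+2) <= / 100).
  { split. apply Rinv_0_lt_compat, pow10_pos.
    apply Rinv_le_contravar; [lra|]. replace (n+2)%nat with (2 + n)%nat by lia.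
    rewrite pow_add. pose proof (pow_R1_Rle 10 n ltac:(lra)). simpl. nra. }
  assert (Hr : fst (cnt (10 ^ T n)) - r a n =
     IZR (Z.of_nat (Q n) - Z.of_nat (10 ^ T n) - Z.of_nat (snd (cnt (10 ^ T n))))).
  { rewrite !minus_IZR, <- !INR_IZR_INZ. rewrite He. unfold r, dd.
    rewrite <- Q_spec, pow_INR, INR10. ring. }
  assert (Z.of_nat (Q n) - Z.of_nat (10 ^ T n) - Z.of_nat (snd (cnt (10 ^ T n))) = 0)%Z.
  { apply IZR_small. rewrite <- Hr. lra. }
  rewrite H1 in Hr. simpl in Hr. lra.
Qed.

Lemma ws_decr n : exists m, lam (ws m) < lam (ws n).
Proof.
  rewrite lam_ws. pose proof (r_pos a ha n).
  destruct (INR_unbounded (2 / r a n)) as [m Hm].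
  exists m. rewrite lam_ws. pose proof (r_upper a ha m).
  assert (INR m <= 10 ^ m).
  { clear. induction m. simpl; lra. rewrite S_INR. simpl. pose proof (pow_R1_Rle 10 m ltac:(lra)). lra. }
  assert (INR m <= 10 ^ (m + 2)).
  { rewrite pow_add. simpl. pose proof (pow10_pos m). nra. }
  assert (/ 10 ^ (m+2) <= / INR m).
  { apply Rinv_le_contravar; auto. apply Rlt_le_trans with (2 / r a n); [|lra].
    unfold Rdiv. apply Rmult_lt_0_compat; [lra|]. apply Rinv_0_lt_compat; auto. }
  assert (/ INR m < r a n / 2).
  { replace (r a n / 2) with (/ (2 / r a n)) by (field; lra).
    assert (0 < 2 / r a n) by (unfold Rdiv; apply Rmult_lt_0_compat; [lra|]; apply Rinv_0_lt_compat; auto).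
    apply Rinv_lt_contravar; [apply Rmult_lt_0_compat; lra | lra]. }
  lra.
Qed.

Lemma lam_ws_bounds n : 0 <= lam (ws n) < 1.
Proof. unfold ws. rewrite lam_gad. apply cnt_inv. Qed.

End C.

Definition indP (P : Prop) : R := if excluded_middle_informative P then 1 else 0.
Lemma indP_t (P : Prop) : P -> indP P = 1.
Proof. intro H; unfold indP; destruct (excluded_middle_informative P); tauto. Qed.
Lemma indP_f (P : Prop) : ~ P -> indP P = 0.
Proof. intro H; unfold indP; destruct (excluded_middle_informative P); tauto. Qed.
Lemma indP_iff (P Q : Prop) : (P <-> Q) -> indP P = indP Q.
Proof. intro H; destruct (classic P). rewrite !indP_t; tauto. rewrite !indP_f; tauto. Qed.

Fixpoint sel (c : nat -> Prop) (l : list R) : R :=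
  match l with [] => 0 | x :: l' => indP (c O) * x + sel (fun i => c (S i)) l' end.

Lemma sel_ext l : forall c c', (forall i, c i <-> c' i) -> sel c l = sel c' l.
Proof.
  induction l; intros c c' H; simpl; auto.
  rewrite (indP_iff _ _ (H O)). rewrite (IHl (fun i => c (S i)) (fun i => c' (S i))); auto.
Qed.

Lemma sel_le l : forall c, (forall i, c i -> c (S i) -> False) ->
  sel c l <= opt l /\ (~ c O -> sel c l <= opt l - lam l).
Proof.
  induction l as [|x l IH]; intros c Hc; simpl. split; intros; lra.
  assert (Hc' : forall i, c (S i) -> c (S (S i)) -> False) by (intros i h1 h2; exact (Hc (S i) h1 h2)).
  destruct (IH _ Hc') as [H1 H2].
  pose proof (lam_nonneg l).
  destruct (classic (c O)) as [h|h].
  - rewrite indP_t by auto.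
    assert (~ c 1%nat) by (intro h1; exact (Hc O h h1)).
    specialize (H2 H0).
    assert (x - lam l <= Rmax 0 (x - lam l)) by apply Rmax_r.
    split; [lra | tauto].
  - rewrite indP_f by auto.
    assert (0 <= Rmax 0 (x - lam l)) by apply Rmax_l.
    split; intros; lra.
Qed.

Fixpoint best (l : list R) : list bool :=
  match l with
  | [] => []
  | x :: l' => if Rle_dec (lam l') x then
                 match l' with [] => [true] | _ :: l'' => true :: false :: best l'' end
               else false :: best l'
  end.

Fixpoint selb (bs : list bool) (l : list R) : R :=
  match l with [] => 0 | x :: l' => (if hd false bs then x else 0) + selb (tl bs) l' end.

Lemma best_props : forall n l, (length l <= n)%nat ->
  selb (best l) l = opt l /\ length (best l) = length l /\
  (forall i, nth i (best l) false = true -> nth (S i) (best l) false = true -> False).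
Proof.
  induction n; intros l Hl.
  - destruct l; simpl in *; [|lia]. repeat split; auto. intros [|i]; simpl; discriminate.
  - destruct l as [|x l']. simpl. repeat split; auto. intros [|i]; simpl; discriminate.
    simpl. destruct (Rle_dec (lam l') x) as [Hle|Hgt].
    + destruct l' as [|y l''].
      * simpl in *. unfold Rmax. destruct (Rle_dec 0 (x - 0)); [|lra].
        split; [|split]; [lra|auto|]. intros [|[|i]]; simpl; try discriminate; try (destruct i; discriminate).
      * simpl in Hl. destruct (IHn l'' ltac:(lia)) as [A [B C]].
        simpl selb. rewrite A. split; [|split].
        -- simpl opt. fold (lam (y :: l'')). unfold Rmax at 1.
           destruct (Rle_dec 0 (x - lam (y :: l''))); [|lra]. simpl. lra.
        -- simpl. lia.
        -- intros [|[|i]] h1 h2; simpl in *; try discriminate. eapply C; eauto.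
    + apply Rnot_le_lt in Hgt. simpl in Hl. destruct (IHn l' ltac:(lia)) as [A [B C]].
      simpl selb. rewrite A. split; [|split].
      * simpl opt. fold (lam l'). unfold Rmax at 1.
        destruct (Rle_dec 0 (x - lam l')); [lra|]. simpl. lra.
      * simpl. lia.
      * intros [|i] h1 h2; simpl in *; try discriminate. eapply C; eauto.
Qed.

Lemma sel_selb l : forall bs, sel (fun i => nth i bs false = true) l = selb bs l.
Proof.
  induction l; intros bs; simpl; auto.
  rewrite <- (IHl (tl bs)).
  assert (E : sel (fun i => nth (S i) bs false = true) l = sel (fun i => nth i (tl bs) false = true) l).
  { apply sel_ext. intro i. destruct bs; simpl. destruct i; tauto. tauto. }
  rewrite E. f_equal.
  destruct bs as [|[|] bs]; simpl.
  - rewrite indP_f; [lra|discriminate].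
  - rewrite indP_t; [lra|auto].
  - rewrite indP_f; [lra|discriminate].
Qed.

Definition bestA (l : list R) := best l.
Definition bestB (l : list R) := false :: best (tl l).

Lemma bestA_props l : sel (fun i => nth i (bestA l) false = true) l = opt l /\
  (forall i, nth i (bestA l) false = true -> (i < length l)%nat) /\
  (forall i, nth i (bestA l) false = true -> nth (S i) (bestA l) false = true -> False).
Proof.
  rewrite sel_selb. destruct (best_props (length l) l ltac:(lia)) as [A [B C]].
  unfold bestA. repeat split; auto.
  intros i H. rewrite <- B. destruct (Nat.lt_ge_cases i (length (best l))); auto.
  rewrite nth_overflow in H by lia. discriminate.
Qed.

Lemma bestB_props l : sel (fun i => nth i (bestB l) false = true) l = opt l - lam l /\
  (forall i, nth i (bestB l) false = true -> (0 < i < length l)%nat) /\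
  (forall i, nth i (bestB l) false = true -> nth (S i) (bestB l) false = true -> False).
Proof.
  rewrite sel_selb. destruct (best_props (length (tl l)) (tl l) ltac:(lia)) as [A [B C]].
  unfold bestB. split; [|split].
  - destruct l as [|x l']; simpl. lra. simpl in A. rewrite A. lra.
  - intros [|i] Hi; simpl in Hi; [discriminate|].
    destruct (Nat.lt_ge_cases i (length (best (tl l)))) as [h|h].
    + rewrite B in h. destruct l; simpl in *; lia.
    + rewrite nth_overflow in Hi by lia. discriminate.
  - intros [|i] h1 h2; simpl in *; try discriminate. eapply C; eauto.
Qed.

Section S.
Variable w : nat -> nat -> R.

Definition fsum (l : list (nat*nat)) := fold_right (fun e acc => w (fst e) (snd e) + acc) 0 l.
Definition sumI (P : edge_set) (U : list (nat*nat)) :=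
  fold_right (fun e acc => indP (P e) * w (fst e) (snd e) + acc) 0 U.

Lemma fsum_perm l1 l2 : Permutation l1 l2 -> fsum l1 = fsum l2.
Proof. induction 1; simpl in *; lra. Qed.

Lemma filter_exists (P : edge_set) U : NoDup U ->
  exists l, NoDup l /\ (forall e, In e l <-> In e U /\ P e) /\ fsum l = sumI P U.
Proof.
  induction U as [|e U IH]; intros Hn.
  - exists []. simpl. split; [constructor|split; [tauto|reflexivity]].
  - inversion Hn; subst. destruct (IH H2) as [l [A [B C]]].
    destruct (classic (P e)) as [h|h].
    + exists (e :: l). split; [|split].
      * constructor; auto. intro i. apply B in i. tauto.
      * intro f. simpl. rewrite B. split; [intros [->|[]]; auto|].
        intros [[->|i] p]; auto.
      * simpl. rewrite C, indP_t; auto. lra.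
    + exists l. split; [|split]; auto.
      * intro f. rewrite B. simpl. split; [tauto|]. intros [[->|i] p]; tauto.
      * simpl. rewrite C, indP_f; auto. lra.
Qed.

Lemma wsum_eq F U s : NoDup U -> (forall e, F e -> In e U) -> wsum w F s -> s = sumI F U.
Proof.
  intros Hn HF [l0 [N0 [E0 S0]]].
  destruct (filter_exists F U Hn) as [l [A [B C]]].
  rewrite S0, <- C. apply fsum_perm. apply NoDup_Permutation; auto.
  intro e. rewrite B, <- E0. split; auto. intros [_ h]; auto.
Qed.

Lemma wsum_ex F U : NoDup U -> (forall e, F e -> In e U) -> finite_set F /\ exists s, wsum w F s.
Proof.
  intros Hn HF. destruct (filter_exists F U Hn) as [l [A [B C]]].
  assert (E : forall e, F e <-> In e l) by (intro e; rewrite B; split; auto; tauto).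
  split. exists l; auto. exists (fsum l). exists l. auto.
Qed.

Lemma sumI_diff (N M T : edge_set) U : (forall e, In e U -> (N e <-> T e)) ->
  sumI (set_diff N M) U - sumI (set_diff M N) U = sumI T U - sumI M U.
Proof.
  induction U as [|e U IH]; intros H; simpl. lra.
  assert (IH' := IH (fun f h => H f (or_intror h))).
  assert (He := H e (or_introl eq_refl)).
  unfold set_diff in *.
  destruct (classic (M e)); destruct (classic (T e)).
  - rewrite (indP_f (N e /\ ~ M e)), (indP_f (M e /\ ~ N e)), (indP_t (T e)), (indP_t (M e)); try tauto. lra.
  - rewrite (indP_f (N e /\ ~ M e)), (indP_t (M e /\ ~ N e)), (indP_f (T e)), (indP_t (M e)); try tauto. lra.
  - rewrite (indP_t (N e /\ ~ M e)), (indP_f (M e /\ ~ N e)), (indP_t (T e)), (indP_f (M e)); try tauto. lra.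
  - rewrite (indP_f (N e /\ ~ M e)), (indP_f (M e /\ ~ N e)), (indP_f (T e)), (indP_f (M e)); try tauto. lra.
Qed.

Lemma improve adj (M T : edge_set) U (Z : nat -> Prop) :
  is_matching adj M -> is_matching adj T -> NoDup U ->
  (forall e, In e U -> Z (fst e) /\ Z (snd e)) ->
  (forall e, M e -> Z (fst e) \/ Z (snd e) -> In e U) ->
  (forall e, T e -> In e U) ->
  sumI M U < sumI T U -> ~ strongly_w_maximal adj w M.
Proof.
  intros HM HT Hn HU HMU HTU Hlt [_ Hmax].
  set (N := fun e => (M e /\ ~ (Z (fst e) \/ Z (snd e))) \/ T e).
  assert (HN : is_matching adj N).
  { destruct HM as [M1 M2]. destruct HT as [T1 T2]. split.
    - intros e [[h _]|h]; auto.
    - intros e f [[he ze]|he] [[hf zf]|hf] nef.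
      + auto.
      + destruct (HU f (HTU f hf)). repeat split; intro E; apply ze; rewrite E; tauto.
      + destruct (HU e (HTU e he)). repeat split; intro E; apply zf; rewrite <- E; tauto.
      + auto. }
  assert (S1 : forall e, set_diff N M e -> In e U).
  { intros e [[[h _]|h] nm]; [tauto|auto]. }
  assert (S2 : forall e, set_diff M N e -> In e U).
  { intros e [h nn]. apply HMU; auto. destruct (classic (Z (fst e) \/ Z (snd e))); auto.
    exfalso. apply nn. left. auto. }
  destruct (wsum_ex _ _ Hn S1) as [F1 [s1 W1]].
  destruct (wsum_ex _ _ Hn S2) as [F2 [s2 W2]].
  specialize (Hmax N HN F2 F1 s1 s2 W1 W2).
  rewrite (wsum_eq _ _ _ Hn S1 W1), (wsum_eq _ _ _ Hn S2 W2) in Hmax.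
  assert (D := sumI_diff N M T U).
  assert (sumI (set_diff N M) U - sumI (set_diff M N) U = sumI T U - sumI M U).
  apply D. intros e i. unfold N. destruct (HU e i). split; [intros [[_ h]|h]; tauto | auto].
  lra.
Qed.

End S.

Definition V (k j : nat) : nat := S (Cantor.to_nat (k, j)).

Lemma V_inj k j k' j' : V k j = V k' j' -> k = k' /\ j = j'.
Proof. unfold V. intro H. assert (H1 : Cantor.to_nat (k, j) = Cantor.to_nat (k', j')) by lia. apply Cantor.to_nat_inj in H1. injection H1. auto. Qed.
Lemma V_nz k j : V k j <> 0%nat.
Proof. unfold V; lia. Qed.
Lemma V_lt k j : (V k j < V k (S j))%nat.
Proof.
  unfold V. pose proof (Cantor.to_nat_spec k j). pose proof (Cantor.to_nat_spec k (S j)). nia.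
Qed.

Ltac vneq := let E := fresh in intro E;
  first [ exact (V_nz _ _ E) | exact (V_nz _ _ (eq_sym E)) | apply V_inj in E; destruct E; lia ].

Section G.
Variable a : R.
Hypothesis ha : infinite_sum a_term a.

Definition L k := length (ws a k).
Definition W (y : nat) : R :=
  match y with O => 0 | S y' =>
    let (k, j) := Cantor.of_nat y' in match j with O => 2*a | S i => nth i (ws a k) 0 end end.
Definition ww (u v : nat) : R := W v.
Definition E0 (x y : nat) : Prop :=
  (x = 0%nat /\ exists k, y = V k 0) \/ (exists k i, (i < L k)%nat /\ x = V k i /\ y = V k (S i)).
Definition adj (x y : nat) : Prop := E0 x y \/ E0 y x.

Definition hub k := (0%nat, V k 0).
Definition pe k i := (V k i, V k (S i)).
Definition pathU k := map (pe k) (seq 0 (L k)).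

Lemma W_V0 k : W (V k 0) = 2 * a.
Proof. unfold W, V. rewrite Cantor.cancel_of_to. reflexivity. Qed.
Lemma W_VS k i : W (V k (S i)) = nth i (ws a k) 0.
Proof. unfold W, V. rewrite Cantor.cancel_of_to. reflexivity. Qed.

Lemma E0_lt x y : E0 x y -> (x < y)%nat.
Proof.
  intros [[-> [k ->]]|[k [i [_ [-> ->]]]]]. pose proof (V_nz k 0); lia. apply V_lt.
Qed.

Lemma edge_cases' e : is_edge adj e -> (exists k, e = hub k) \/ (exists k i, (i < L k)%nat /\ e = pe k i).
Proof.
  destruct e as [x y]. intros [Hlt [H|H]]; simpl in *.
  - destruct H as [[-> [k ->]]|[k [i [Hi [-> ->]]]]].
    + left. exists k. reflexivity.
    + right. exists k, i. auto.
  - apply E0_lt in H. lia.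
Qed.

Lemma hub_edge k : is_edge adj (hub k).
Proof. split; simpl. pose proof (V_nz k 0); lia. left. left. eauto. Qed.
Lemma pe_edge k i : (i < L k)%nat -> is_edge adj (pe k i).
Proof. intro. split; simpl. apply V_lt. left. right. eauto. Qed.

Lemma in_pathU e k : In e (pathU k) <-> exists i, (i < L k)%nat /\ e = pe k i.
Proof.
  unfold pathU. rewrite in_map_iff. split.
  - intros [i [<- Hi]]. apply in_seq in Hi. exists i. split; auto; lia.
  - intros [i [Hi ->]]. exists i. split; auto. apply in_seq. lia.
Qed.

Lemma pathU_nodup k : NoDup (pathU k).
Proof.
  apply NoDup_map_NoDup_ForallPairs; [|apply seq_NoDup].
  intros x y _ _ E. apply (f_equal fst) in E. unfold pe in E. simpl in E. apply V_inj in E. tauto.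
Qed.

Lemma sumI_cons P e U : sumI ww P (e :: U) = indP (P e) * ww (fst e) (snd e) + sumI ww P U.
Proof. reflexivity. Qed.

Lemma ww_pe k i : ww (fst (pe k i)) (snd (pe k i)) = nth i (ws a k) 0.
Proof. unfold ww, pe. cbn [fst snd]. apply W_VS. Qed.
Lemma ww_hub k : ww (fst (hub k)) (snd (hub k)) = 2 * a.
Proof. unfold ww, hub. cbn [fst snd]. apply W_V0. Qed.

Lemma sum_path_gen k P l : forall s, (forall i, (i < length l)%nat -> nth i l 0 = nth (s+i) (ws a k) 0) ->
  sumI ww P (map (pe k) (seq s (length l))) = sel (fun i => P (pe k (s+i))) l.
Proof.
  induction l as [|x l IH]; intros s H; simpl. reflexivity.
  change (sumI ww P (pe k s :: map (pe k) (seq (S s) (length l))) =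
    indP (P (pe k (s + 0))) * x + sel (fun i => P (pe k (s + S i))) l).
  rewrite sumI_cons.
  rewrite ww_pe.
  rewrite IH.
  - rewrite Nat.add_0_r. f_equal.
    + f_equal. specialize (H O ltac:(simpl; lia)). simpl in H. rewrite Nat.add_0_r in H. auto.
    + apply sel_ext. intro i. rewrite Nat.add_succ_r. tauto.
  - intros i Hi. specialize (H (S i) ltac:(simpl; lia)). simpl in H. rewrite H. f_equal. lia.
Qed.

Lemma sum_path k P : sumI ww P (pathU k) = sel (fun i => P (pe k i)) (ws a k).
Proof.
  unfold pathU, L. rewrite (sum_path_gen k P (ws a k) 0); auto.
Qed.

Lemma sumI_app P U1 U2 : sumI ww P (U1 ++ U2) = sumI ww P U1 + sumI ww P U2.
Proof. induction U1; simpl. lra. unfold sumI in *. simpl. rewrite IHU1. lra. Qed.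

Lemma M_noncons M k : is_matching adj M -> forall i, M (pe k i) -> M (pe k (S i)) -> False.
Proof.
  intros [_ HM] i h1 h2. destruct (HM _ _ h1 h2) as [_ [_ [E _]]].
  intro E. apply (f_equal fst) in E. unfold pe in E. simpl in E. apply V_inj in E. lia.
  unfold pe in E. simpl in E. auto.
Qed.

Lemma simple : simple_graph adj.
Proof.
  split. intros u v [h|h]; unfold adj; auto.
  intros u [h|h]; apply E0_lt in h; lia.
Qed.

Lemma weights u v : is_edge adj (u, v) -> ww u v = a \/ ww u v = 2 * a \/ ww u v = 2 * a - 1.
Proof.
  intro H. destruct (edge_cases' _ H) as [[k E]|[k [i [Hi E]]]]; unfold hub, pe in E;
  assert (Ev := f_equal snd E); simpl in Ev; subst v; unfold ww.
  - rewrite W_V0. auto.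
  - rewrite W_VS. pose proof (gad_weights a (10 ^ T k)) as F. rewrite Forall_forall in F.
    apply F. apply nth_In. exact Hi.
Qed.

End G.

Definition noncons (bs : list bool) := forall i, nth i bs false = true -> nth (S i) bs false = true -> False.

Lemma pe_inj k i k' j : pe k i = pe k' j -> k = k' /\ i = j.
Proof. intro E. apply (f_equal fst) in E. unfold pe in E. simpl in E. apply V_inj; auto. Qed.
Lemma hub_pe k k' i : hub k <> pe k' i.
Proof. intro E. apply (f_equal fst) in E. unfold pe, hub in E. simpl in E. exact (V_nz _ _ (eq_sym E)). Qed.
Lemma hub_inj k k' : hub k = hub k' -> k = k'.
Proof. intro E. apply (f_equal snd) in E. unfold hub in E. simpl in E. apply V_inj in E. tauto. Qed.

Definition vdisj (e f : nat * nat) := fst e <> fst f /\ fst e <> snd f /\ snd e <> fst f /\ snd e <> snd f.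

Lemma disj_same k i j bs : noncons bs -> nth i bs false = true -> nth j bs false = true -> pe k i <> pe k j -> vdisj (pe k i) (pe k j).
Proof.
  intros Hn hi hj ne.
  assert (i <> j) by (intro; subst; auto).
  assert (i <> S j) by (intro; subst; eauto).
  assert (j <> S i) by (intro; subst; eauto).
  unfold vdisj, pe; simpl; repeat split; vneq.
Qed.

Lemma disj_diff k i k' j : k <> k' -> vdisj (pe k i) (pe k' j).
Proof. intro. unfold vdisj, pe; simpl; repeat split; vneq. Qed.

Lemma disj_hub_pe k k' i : k <> k' \/ (0 < i)%nat -> vdisj (hub k) (pe k' i).
Proof. intro. unfold vdisj, pe, hub; simpl; repeat split; vneq. Qed.

Lemma vdisj_sym e f : vdisj e f -> vdisj f e.
Proof. unfold vdisj. intuition. Qed.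

Section G.
Variable a : R.
Hypothesis ha : infinite_sum a_term a.

Lemma pe_bit_edge k bs i : (forall i, nth i bs false = true -> (i < L a k)%nat) -> nth i bs false = true -> is_edge (adj a) (pe k i).
Proof. intros H h. apply pe_edge. auto. Qed.

Lemma sumI_cons' P e U : sumI (ww a) P (e :: U) = indP (P e) * ww a (fst e) (snd e) + sumI (ww a) P U.
Proof. reflexivity. Qed.

Lemma M_hub_unique M n k : is_matching (adj a) M -> M (hub n) -> M (hub k) -> k = n.
Proof.
  intros [_ HM] h1 h2. destruct (Nat.eq_dec k n); auto. exfalso.
  assert (hub k <> hub n) by (intro E; apply hub_inj in E; auto).
  destruct (HM _ _ h2 h1 H) as [E _]. apply E. reflexivity.
Qed.

Lemma caseA M n : is_matching (adj a) M -> M (hub n) -> ~ strongly_w_maximal (adj a) (ww a) M.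
Proof.
  intros HM Hn.
  destruct (ws_decr a ha n) as [m Hm].
  assert (nm : n <> m) by (intro; subst; lra).
  set (U := hub n :: hub m :: pathU a n ++ pathU a m).
  set (Z := fun x => x = 0%nat \/ (exists j, (j <= L a n)%nat /\ x = V n j) \/ (exists j, (j <= L a m)%nat /\ x = V m j)).
  destruct (bestA_props (ws a n)) as [A1 [A2 A3]].
  destruct (bestB_props (ws a m)) as [B1 [B2 B3]].
  set (Tm := fun e => e = hub m \/ (exists i, e = pe n i /\ nth i (bestA (ws a n)) false = true) \/
                      (exists i, e = pe m i /\ nth i (bestB (ws a m)) false = true)).
  assert (TA : forall i, Tm (pe n i) <-> nth i (bestA (ws a n)) false = true).
  { intro i. unfold Tm. split.
    - intros [E|[[j [E h]]|[j [E h]]]].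
      + exfalso. exact (hub_pe _ _ _ (eq_sym E)).
      + apply pe_inj in E. destruct E; subst; auto.
      + apply pe_inj in E. tauto.
    - intro h. right; left. eauto. }
  assert (TB : forall i, Tm (pe m i) <-> nth i (bestB (ws a m)) false = true).
  { intro i. unfold Tm. split.
    - intros [E|[[j [E h]]|[j [E h]]]].
      + exfalso. exact (hub_pe _ _ _ (eq_sym E)).
      + apply pe_inj in E. destruct E; subst; tauto.
      + apply pe_inj in E. destruct E; subst; auto.
    - intro h. right; right. eauto. }
  apply (improve (ww a) (adj a) M Tm U Z); auto.
  -
    split.
    + intros e [E|[[i [E h]]|[i [E h]]]]; subst e.
      * apply hub_edge.
      * apply pe_edge. unfold L. auto.
      * apply pe_edge. unfold L. apply B2 in h. lia.
    + intros e f He Hf nef. fold (vdisj e f).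
      destruct He as [E|[[i [E h]]|[i [E h]]]]; destruct Hf as [F|[[j [F h']]|[j [F h']]]]; subst e f.
      * exfalso; auto.
      * apply disj_hub_pe. auto.
      * apply disj_hub_pe. apply B2 in h'. right; lia.
      * apply vdisj_sym, disj_hub_pe. auto.
      * apply (disj_same _ _ _ _ A3); auto.
      * apply disj_diff; auto.
      * apply vdisj_sym, disj_hub_pe. apply B2 in h. right; lia.
      * apply disj_diff; auto.
      * apply (disj_same _ _ _ _ B3); auto.
  -
    unfold U. constructor; [|constructor].
    + intros [E|E]. apply hub_inj in E; auto.
      apply in_app_iff in E. destruct E as [E|E]; apply in_pathU in E; destruct E as [i [_ E]];
      exact (hub_pe _ _ _ E).
    + intro E. apply in_app_iff in E. destruct E as [E|E]; apply in_pathU in E; destruct E as [i [_ E]];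
      exact (hub_pe _ _ _ E).
    + apply NoDup_app; try apply pathU_nodup.
      intros e h1 h2. apply in_pathU in h1. apply in_pathU in h2.
      destruct h1 as [i [_ ->]]. destruct h2 as [j [_ E]]. apply pe_inj in E. tauto.
  -
    intros e h. unfold U in h. simpl in h. destruct h as [<-|[<-|h]].
    + unfold hub, Z; simpl. split; [auto|]. right; left. exists 0%nat. split; [lia|auto].
    + unfold hub, Z; simpl. split; [auto|]. right; right. exists 0%nat. split; [lia|auto].
    + apply in_app_iff in h. destruct h as [h|h]; apply in_pathU in h; destruct h as [i [Hi ->]];
      unfold pe, Z; simpl; split.
      * right; left; exists i; split; [lia|auto].
      * right; left; exists (S i); split; [lia|auto].
      * right; right; exists i; split; [lia|auto].
      * right; right; exists (S i); split; [lia|auto].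
  -
    intros e He Hz. destruct HM as [M1 M2].
    destruct (edge_cases' a e (M1 e He)) as [[k ->]|[k [i [Hi ->]]]].
    + assert (k = n) by (apply (M_hub_unique M n k); auto; split; auto). subst. unfold U. simpl; auto.
    + unfold U. simpl. right; right. apply in_app_iff.
      assert (k = n \/ k = m) as [->| ->].
      { unfold Z, pe in Hz; simpl in Hz.
        destruct Hz as [[E|[[j [_ E]]|[j [_ E]]]]|[E|[[j [_ E]]|[j [_ E]]]]];
        try (exfalso; exact (V_nz _ _ E)); apply V_inj in E; tauto. }
      * left. apply in_pathU. eauto.
      * right. apply in_pathU. eauto.
  -
    intros e [E|[[i [E h]]|[i [E h]]]]; subst e; unfold U; simpl; auto; right; right; apply in_app_iff.
    + left. apply in_pathU. exists i. split; auto.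
    + right. apply in_pathU. exists i. split; auto. unfold L. apply B2 in h. lia.
  -
    unfold U. rewrite !sumI_cons', !sumI_app, !sum_path, !ww_hub.
    rewrite (indP_t (M (hub n))) by auto.
    rewrite (indP_f (M (hub m))) by (intro h; apply nm; symmetry; apply (M_hub_unique M n m); auto).
    rewrite (indP_f (Tm (hub n))).
    2:{ intros [E|[[i [E _]]|[i [E _]]]]. apply hub_inj in E; auto. exact (hub_pe _ _ _ E). exact (hub_pe _ _ _ E). }
    rewrite (indP_t (Tm (hub m))) by (left; reflexivity).
    rewrite (sel_ext _ (fun i => Tm (pe n i)) _ TA), A1.
    rewrite (sel_ext _ (fun i => Tm (pe m i)) _ TB), B1.
    destruct (sel_le (ws a n) (fun i => M (pe n i)) (M_noncons a M n HM)) as [_ Sn].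
    destruct (sel_le (ws a m) (fun i => M (pe m i)) (M_noncons a M m HM)) as [Sm _].
    assert (Sn' : sel (fun i => M (pe n i)) (ws a n) <= opt (ws a n) - lam (ws a n)).
    { apply Sn. intro h. destruct HM as [_ M2].
      assert (hub n <> pe n 0) by apply hub_pe.
      destruct (M2 _ _ Hn h H) as [_ [_ [E _]]]. apply E. reflexivity. }
    lra.
Qed.
End G.

Section G.
Variable a : R.
Hypothesis ha : infinite_sum a_term a.

Lemma caseB M : is_matching (adj a) M -> (forall k, ~ M (hub k)) -> ~ strongly_w_maximal (adj a) (ww a) M.
Proof.
  intros HM Hn. set (m := 0%nat).
  set (U := hub m :: pathU a m).
  set (Z := fun x => x = 0%nat \/ (exists j, (j <= L a m)%nat /\ x = V m j)).
  destruct (bestB_props (ws a m)) as [B1 [B2 B3]].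
  set (Tm := fun e => e = hub m \/ (exists i, e = pe m i /\ nth i (bestB (ws a m)) false = true)).
  assert (TB : forall i, Tm (pe m i) <-> nth i (bestB (ws a m)) false = true).
  { intro i. unfold Tm. split.
    - intros [E|[j [E h]]].
      + exfalso. exact (hub_pe _ _ _ (eq_sym E)).
      + apply pe_inj in E. destruct E; subst; auto.
    - intro h. right. eauto. }
  apply (improve (ww a) (adj a) M Tm U Z); auto.
  - split.
    + intros e [E|[i [E h]]]; subst e.
      * apply hub_edge.
      * apply pe_edge. unfold L. apply B2 in h. lia.
    + intros e f He Hf nef. fold (vdisj e f).
      destruct He as [E|[i [E h]]]; destruct Hf as [F|[j [F h']]]; subst e f.
      * exfalso; auto.
      * apply disj_hub_pe. apply B2 in h'. right; lia.
      * apply vdisj_sym, disj_hub_pe. apply B2 in h. right; lia.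
      * apply (disj_same _ _ _ _ B3); auto.
  - unfold U. constructor.
    + intro E. apply in_pathU in E. destruct E as [i [_ E]]. exact (hub_pe _ _ _ E).
    + apply pathU_nodup.
  - intros e h. unfold U in h. simpl in h. destruct h as [<-|h].
    + unfold hub, Z; simpl. split; [auto|]. right. exists 0%nat. split; [lia|auto].
    + apply in_pathU in h; destruct h as [i [Hi ->]]; unfold pe, Z; simpl; split.
      * right; exists i; split; [lia|auto].
      * right; exists (S i); split; [lia|auto].
  - intros e He Hz. destruct HM as [M1 M2].
    destruct (edge_cases' a e (M1 e He)) as [[k ->]|[k [i [Hi ->]]]].
    + exfalso. exact (Hn k He).
    + unfold U. simpl. right.
      assert (k = m) as ->.
      { unfold Z, pe in Hz; simpl in Hz.
        destruct Hz as [[E|[j [_ E]]]|[E|[j [_ E]]]];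
        try (exfalso; exact (V_nz _ _ E)); apply V_inj in E; tauto. }
      apply in_pathU. eauto.
  - intros e [E|[i [E h]]]; subst e; unfold U; simpl; auto; right.
    apply in_pathU. exists i. split; auto. unfold L. apply B2 in h. lia.
  - unfold U. rewrite !sumI_cons', !sum_path, !ww_hub.
    rewrite (indP_f (M (hub m))) by auto.
    rewrite (indP_t (Tm (hub m))) by (left; reflexivity).
    rewrite (sel_ext _ (fun i => Tm (pe m i)) _ TB), B1.
    destruct (sel_le (ws a m) (fun i => M (pe m i)) (M_noncons a M m HM)) as [Sm _].
    pose proof (lam_ws_bounds a ha m). pose proof (a_bounds a ha).
    lra.
Qed.

End G.

Theorem mainTheorem9 (a : R) (ha : infinite_sum a_term a) :
  exists (adj : nat -> nat -> Prop) (w : nat -> nat -> R),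
    simple_graph adj /\
    (forall u v, is_edge adj (u, v) ->
       w u v = a \/ w u v = 2 * a \/ w u v = 2 * a - 1) /\
    ~ (exists M : edge_set, strongly_w_maximal adj w M).
Proof.
  exists (adj a), (ww a). split; [apply simple|split; [apply weights|]].
  intros [M HM]. pose proof (proj1 HM) as Hm.
  destruct (classic (exists k, M (hub k))) as [[k Hk]|H].
  - exact (caseA a ha M k Hm Hk HM).
  - apply (caseB a ha M Hm); [|exact HM]. intros k h. apply H. eauto.
Qed.
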